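(* Let $a<b$ be real numbers, let $M\colon[a,b]\to\mathbb{R}$ be non-decreasing, and let $N\colon[M(a),M(b)]\to\mathbb{R}$ be non-decreasing. Let $\Lambda=N\circ M\colon[a,b]\to\mathbb{R}$, let $\lambda$ be the measure on $[a,b]$ corresponding to $\Lambda$, and let $\nu$ be the measure on $[M(a),M(b)]$ corresponding to $N$. Let \[H=\{y\in[M(a),M(b)] : M^{-1}[\{y\}]\text{ contains more than one point}\},\] and let $X\colon[M(a),M(b)]\to[a,b]$ be defined by $X(y)=\inf\{x\in[a,b]: y\le M(x)\}$. Suppose that $N$ is right-continuous at $y$ for each $y\in H$ (where, by convention, $N$ is considered right-continuous at $M(b)$, with $N(M(b)+)=N(M(b))$). Then $\lambda$ is the image measure of $\nu$ under $X$, i.e. $\lambda(E)=\nu(X^{-1}[E])$ for every Borel set $E\subseteq[a,b]$, and for each bounded Borel function $f\colon[a,b]\to\mathbb{R}$, \[\int_a^b f(x)\,dN(M(x))=\int_{M(a)}^{M(b)} f(X(y))\,dN(y).\]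
   Context: ''Non-decreasing'' is what the paper calls increasing. For a non-decreasing function $F\colon[c,d]\to\mathbb{R}$, the measure corresponding to $F$ is the unique Borel measure $\mu$ on $[c,d]$ such that for every continuous $f\colon[c,d]\to\mathbb{R}$, $\int_{[c,d]} f\,d\mu$ equals the Riemann–Stieltjes integral $\int_c^d f(x)\,dF(x)$. For a bounded Borel function $f$, the Lebesgue–Stieltjes integral $\int_c^d f(x)\,dF(x)$ is defined as $\int_{[c,d]} f\,d\mu$. The notation $\int_a^b f(x)\,dN(M(x))$ means $\int_a^b f(x)\,d\Lambda(x)$ with $\Lambda=N\circ M$. *)

(* Defs.v *)
From HB Require Import structures.
From mathcomp Require Import all_boot all_order all_algebra.
From mathcomp Require Import all_classical all_reals all_analysis.
Set Implicit Arguments. Unset Strict Implicit. Unset Printing Implicit Defensive.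
Import Order.TTheory GRing.Theory Num.Theory.
Import numFieldNormedType.Exports.
Local Open Scope classical_set_scope.
Local Open Scope ring_scope.

Section Defs.
Variable R : realType.

Definition RS_integral_is (f F : R -> R) (c d I : R) : Prop :=
  forall eps : R, 0 < eps -> exists2 delta : R, 0 < delta &
    forall (n : nat) (x t : nat -> R),
      x 0%N = c -> x n = d ->
      (forall i : nat, (i < n)%N ->
         [/\ x i < x i.+1, x i.+1 - x i < delta & x i <= t i <= x i.+1]) ->
      `| \sum_(i < n) f (t i) * (F (x i.+1) - F (x i)) - I | < eps.

(* mu is "the measure corresponding to F" on [c,d]: a Borel measure
   (represented on R, concentrated on [c,d]) such that for every continuous
   f on [c,d], \int_[c,d] f dmu is the Riemann--Stieltjes integral
   \int_c^d f dF. *)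
Definition corresponding_measure (F : R -> R) (c d : R)
    (mu : {measure set R -> \bar R}) : Prop :=
  mu (~` `[c, d]) = 0%E /\
  forall f : R -> R, {within `[c, d], continuous f} ->
    exists2 I : R, RS_integral_is f F c d I &
      (\int[mu]_(x in `[c, d]) (f x)%:E = I%:E)%E.

Definition multi_level_set (M : R -> R) (a b : R) : set R :=
  [set y | M a <= y <= M b /\
     exists x1 x2, [/\ a <= x1 <= b, a <= x2 <= b, x1 != x2, M x1 = y & M x2 = y]].

Definition gen_inverse (M : R -> R) (a b : R) (y : R) : R :=
  inf [set x | a <= x <= b /\ y <= M x].

End Defs.

(* Main.v *)
Require Import Defs.
From HB Require Import structures.
From mathcomp Require Import all_boot all_order all_algebra.
From mathcomp Require Import all_classical all_reals all_analysis.
Import Order.TTheory GRing.Theory Num.Theory.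
Import numFieldNormedType.Exports.
Local Open Scope classical_set_scope.
Local Open Scope ring_scope.

From mathcomp Require Import ring lra measurable_realfun.
Set Implicit Arguments. Unset Strict Implicit. Unset Printing Implicit Defensive.
Section A.
Variable R : realType.
Implicit Types (c d t s h : R) (F g : R -> R).

Lemma part_mono n (x : nat -> R) : (forall i, (i < n)%N -> x i < x i.+1) ->
  forall i j, (i <= j <= n)%N -> x i <= x j.
Proof.
move=> inc i j; elim: j => [|j IH]; first by rewrite leqn0 => /andP[/eqP -> _].
move=> /andP[ij jn]; rewrite leq_eqVlt in ij; case/orP: ij => [/eqP -> //|ij].
apply: (le_trans (IH _)); first by rewrite -ltnS ij /= ltnW.
exact/ltW/inc.
Qed.

Lemma part_exists c d delta : c <= d -> 0 < delta ->
  exists n (x : nat -> R), [/\ x 0%N = c, x n = d &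
    forall i, (i < n)%N -> x i < x i.+1 /\ x i.+1 - x i < delta].
Proof.
move=> cd dp; rewrite le_eqVlt in cd; case/orP: cd => [/eqP <-|cd].
  by exists 0%N, (fun _ => c); split.
set n := (Num.truncn ((d - c) / delta)).+1.
have n0 : (0 < n%:R :> R) by rewrite ltr0n.
exists n, (fun i => c + i%:R * ((d - c) / n%:R)); split.
- by rewrite mul0r addr0.
- by rewrite mulrCA divff ?mulr1 ?subrKC // gt_eqF.
move=> i _ /=; set q := (d - c) / n%:R.
have qp : 0 < q by rewrite divr_gt0 // subr_gt0.
have -> : c + i.+1%:R * q - (c + i%:R * q) = q.
  by rewrite -natr1 mulrDl mul1r; ring.
split; first by rewrite -natr1 mulrDl mul1r addrA ltrDl.
rewrite /q ltr_pdivrMr // mulrC -ltr_pdivrMr //.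
exact: truncnS_gt.
Qed.
End A.
Section B.
Variable R : realType.
Implicit Types (c d t s h : R) (F g : R -> R).

Lemma RS_approx f F c d I : c <= d -> RS_integral_is f F c d I ->
  forall eps h, 0 < eps -> 0 < h -> exists n (x : nat -> R),
  [/\ x 0%N = c, x n = d, (forall i, (i < n)%N -> x i < x i.+1 /\ x i.+1 - x i < h) &
   `|\sum_(i < n) f (x i) * (F (x i.+1) - F (x i)) - I| < eps].
Proof.
move=> cd RS eps h ep hp; have [delta dp Hd] := RS eps ep.
have mp : 0 < Num.min delta h by rewrite lt_min dp hp.
have [n [x [x0 xn Hx]]] := part_exists cd mp.
exists n, x; split => //.
  by move=> i /Hx [? ]; rewrite lt_min => /andP[].
apply: Hd => // i /Hx [xi]; rewrite lt_min => /andP[xd _]; split => //.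
by rewrite lexx ltW.
Qed.

Lemma part_in c d n (x : nat -> R) : x 0%N = c -> x n = d ->
  (forall i, (i < n)%N -> x i < x i.+1) ->
  forall i, (i <= n)%N -> x i \in `[c, d].
Proof.
move=> x0 xn inc i lin; rewrite in_itv /= -x0 -xn.
by rewrite !(part_mono inc) // ?lin ?leqnn ?leq0n.
Qed.

Lemma sum_lower c d t F g n (x : nat -> R) :
  {in `[c, d] &, {homo F : u v / u <= v}} -> x 0%N = c -> x n = d ->
  (forall i, (i < n)%N -> x i < x i.+1) ->
  (forall u, 0 <= g u) -> (forall u, u <= t -> g u = 1) -> c <= t -> t < d ->
  F t - F c <= \sum_(i < n) g (x i) * (F (x i.+1) - F (x i)).
Proof.
move=> Fh x0 xn inc g0 g1 ct td.
have xin := part_in x0 xn inc.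
have tin : t \in `[c, d] by rewrite in_itv /= ct ltW.
have dF i : (i < n)%N -> 0 <= F (x i.+1) - F (x i).
  by move=> lin; rewrite subr_ge0; apply: Fh; rewrite ?xin ?ltW ?inc // ltnW.
have P : exists k, (k <= n)%N && (t < x k) by exists n; rewrite leqnn xn.
case: (ex_minnP P) => k /andP[kn tk] kmin.
rewrite -(big_mkord xpredT (fun i => g (x i) * (F (x i.+1) - F (x i)))).
rewrite (big_cat_nat (leq0n k) kn) /=.
rewrite (@telescope_sumr_eq _ _ _ (fun i => F (x i))) //; last first.
  move=> i /andP[_ ik]; rewrite g1 ?mul1r //.
  rewrite leNgt; apply/negP => txi.
  have := kmin i; rewrite txi (leq_trans (ltnW ik) kn) => /(_ isT).
  by rewrite leqNgt ik.
apply: (@le_trans _ _ (F (x k) - F (x 0%N))).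
  by rewrite x0 lerD2r; apply: Fh; rewrite ?xin // ltW.
rewrite lerDl big_nat_cond; apply: sumr_ge0 => i /andP[/andP[_ ilt] _].
by rewrite mulr_ge0 ?dF.
Qed.

Lemma sum_upper c d s s' h F g n (x : nat -> R) :
  {in `[c, d] &, {homo F : u v / u <= v}} -> x 0%N = c -> x n = d ->
  (forall i, (i < n)%N -> x i < x i.+1 /\ x i.+1 - x i < h) ->
  (forall u, 0 <= g u) -> (forall u, g u <= 1) -> (forall u, s <= u -> g u = 0) ->
  c < s -> s + h <= s' -> s' <= d -> 0 < h ->
  \sum_(i < n) g (x i) * (F (x i.+1) - F (x i)) <= F s' - F c.
Proof.
move=> Fh x0 xn Hx g0 g1 gs cs ss' s'd hp.
have inc i : (i < n)%N -> x i < x i.+1 by move=> /Hx[].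
have xin := part_in x0 xn inc.
have s'in : s' \in `[c, d] by rewrite in_itv /= s'd andbT (le_trans (ltW cs)) // (le_trans _ ss') // lerDl ltW.
have dF i : (i < n)%N -> 0 <= F (x i.+1) - F (x i).
  by move=> lin; rewrite subr_ge0; apply: Fh; rewrite ?xin ?ltW ?inc // ltnW.
have P : exists k, (k <= n)%N && (s <= x k).
  exists n; rewrite leqnn xn (le_trans _ s'd) // (le_trans _ ss') // lerDl ltW //.
case: (ex_minnP P) => m /andP[mn sm] mmin.
rewrite -(big_mkord xpredT (fun i => g (x i) * (F (x i.+1) - F (x i)))).
rewrite (big_cat_nat (leq0n m) mn) /=.
rewrite [X in _ + X]big_nat_cond [X in _ + X]big1 ?addr0; last first.
  move=> i /andP[/andP[mi ilt] _]; rewrite gs ?mul0r //.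
  by rewrite (le_trans sm) // (part_mono inc) // mi ltnW.
have mx : x m < s'.
  case: m mn sm mmin => [|m] mn sm mmin; first by rewrite x0 in sm; move: (lt_le_trans cs sm); rewrite ltxx.
  have xm : x m < s.
    rewrite ltNge; apply/negP => sxm.
    by have := mmin m; rewrite sxm (ltnW mn) /= => /(_ isT); rewrite ltnn.
  have [_ hm] := Hx m mn.
  by apply: (lt_le_trans _ ss'); rewrite -(subrK (x m) (x m.+1)) addrC ltrD.
apply: (@le_trans _ _ (\sum_(0 <= i < m) (F (x i.+1) - F (x i)))).
  rewrite big_nat_cond [X in _ <= X]big_nat_cond; apply: ler_sum => i /andP[/andP[_ im] _].
  have lin : (i < n)%N by apply: leq_trans im mn.
  by rewrite ler_piMl ?dF.
rewrite telescope_sumr // x0 lerD2r; by apply: Fh; rewrite ?xin //; apply: ltW.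
Qed.
End B.
Section C.
Variable R : realType.
Implicit Types (c d t s h : R) (F : R -> R).

Definition gts t s (u : R) : R := Num.min 1 (Num.max 0 ((s - u) / (s - t))).

Lemma gts_ge0 t s u : (0 <= gts t s u)%R.
Proof. by rewrite /gts le_min ler01 le_max lexx. Qed.

Lemma gts_le1 t s u : (gts t s u <= 1)%R.
Proof. by rewrite /gts ge_min lexx. Qed.

Lemma gts_eq1 t s u : (t < s)%R -> (u <= t)%R -> gts t s u = 1%R.
Proof.
move=> ts ut; rewrite /gts; apply/min_idPl.
rewrite le_max; apply/orP; right.
by rewrite ler_pdivlMr ?subr_gt0 // mul1r lerB.
Qed.

Lemma gts_eq0 t s u : (t < s)%R -> (s <= u)%R -> gts t s u = 0%R.
Proof.
move=> ts su; rewrite /gts.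
have -> : Num.max 0 ((s - u) / (s - t)) = 0%R.
  apply/max_idPl; rewrite pmulr_lle0 ?invr_gt0 ?subr_gt0 //.
  by rewrite subr_le0.
by apply/min_idPr; rewrite ler01.
Qed.

Lemma gts_cont t s : continuous (gts t s).
Proof.
have -> : gts t s = (cst 1%R) \min ((cst 0%R) \max (fun u => (s - u) / (s - t))).
  by apply: funext => u.
apply: min_fun_continuous; first exact: cst_continuous.
apply: max_fun_continuous; first exact: cst_continuous.
move=> v; apply: cvgMl; apply: cvgB; [exact: cvg_cst | exact: cvg_id].
Qed.
End C.
Section D.
Variable R : realType.
Implicit Types (c d t s h : R) (F : R -> R).

Lemma null_restr (mu : {measure set R -> \bar R}) c d (A : set R) :
  mu (~` `[c, d]) = 0%E -> measurable A -> mu A = mu (A `&` `[c, d]).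
Proof.
move=> nul mA.
have mI : measurable (`[c, d] : set R) by exact: measurable_itv.
have -> : A = (A `&` `[c, d]) `|` (A `&` ~` `[c, d]).
  by rewrite -setIUr setUv setIT.
rewrite measureU0 //; first by rewrite -setIUr setUv setIT.
- exact: measurableI.
- exact/measurableI/measurableC.
apply/eqP; rewrite eq_le measure_ge0 andbT -nul.
by apply: le_measure; rewrite ?inE; [apply/measurableI/measurableC|apply/measurableC|apply: subIsetr].
Qed.

Lemma mass (mu : {measure set R -> \bar R}) F c d :
  corresponding_measure F c d mu -> c <= d -> mu `[c, d]%classic = (F d - F c)%:E.
Proof.
case=> nul Hc cd.
have [I RS intI] := Hc (cst 1%R) (continuous_subspaceT (@cst_continuous R R 1%R)).
have e1 := @integral_cst _ _ R mu _ (measurable_itv `[c, d]) 1%:E.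
have e2 := etrans (esym e1) intI.
rewrite mul1e in e2; rewrite e2; congr (_%:E).
have key : forall eps, 0 < eps -> `|F d - F c - I| < eps.
  move=> eps ep; have [n [x [x0 xn Hx Hs]]] := RS_approx cd RS ep ltr01.
  suff <- : \sum_(i < n) cst 1%R (x i) * (F (x i.+1) - F (x i)) = F d - F c by [].
  rewrite (eq_bigr (fun i : 'I_n => F (x i.+1) - F (x i))); last by move=> i _; rewrite /= mul1r.
  by rewrite -(big_mkord xpredT (fun i => F (x i.+1) - F (x i))) telescope_sumr // x0 xn.
have : `|F d - F c - I| <= 0.
  by rewrite leNgt; apply/negP => h; have := key _ h; rewrite ltxx.
by rewrite normr_le0 => /eqP /subr0_eq.
Qed.

Lemma massT (mu : {measure set R -> \bar R}) F c d :
  corresponding_measure F c d mu -> c <= d -> mu setT = (F d - F c)%:E.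
Proof.
move=> H cd; rewrite (null_restr H.1) // setTI; exact: mass.
Qed.
End D.
Section E.
Variable R : realType.
Implicit Types (c d t s h : R) (F : R -> R).

Lemma gts_meas t s (D : set R) : measurable_fun D (fun x => (gts t s x)%:E).
Proof.
by apply/measurable_EFinP; apply: measurable_funTS; apply: continuous_measurable_fun; exact: gts_cont.
Qed.

Lemma ind_meas (A D : set R) : measurable A -> measurable_fun D (fun x => (\1_A x : R)%:E).
Proof. by move=> mA; apply/measurable_EFinP; exact: measurable_indic. Qed.

Lemma B1 (mu : {measure set R -> \bar R}) F c d t s :
  corresponding_measure F c d mu -> {in `[c, d] &, {homo F : u v / u <= v}} ->
  c <= t -> t < s -> s <= d -> ((F t - F c)%:E <= mu `]-oo, s]%classic)%E.
Proof.
case=> nul Hc Fh ct ts sd.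
have cd : c <= d by apply: (le_trans ct); apply: ltW; apply: lt_le_trans ts sd.
have [I RS intI] := Hc (gts t s) (continuous_subspaceT (@gts_cont R t s)).
have I1 : F t - F c <= I.
  apply/ler_addgt0Pr => e ep.
  have [n [x [x0 xn Hx Hs]]] := RS_approx cd RS ep ltr01.
  have inc i : (i < n)%N -> x i < x i.+1 by move=> /Hx[].
  have := sum_lower Fh x0 xn inc (@gts_ge0 _ t s) (fun u => gts_eq1 ts) ct (lt_le_trans ts sd).
  move: Hs; set S := \sum_(i < n) _ => Hs Sl.
  have : S - I < e by apply: le_lt_trans (ler_norm _) Hs.
  lra.
apply: (@le_trans _ _ I%:E); first by rewrite lee_fin.
rewrite -intI.
apply: (@le_trans _ _ (\int[mu]_(x in `[c, d]%classic) (\1_(`]-oo, s]%classic) x : R)%:E)%E).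
  apply: ge0_le_integral => //.
  - by move=> x _; rewrite lee_fin; apply: gts_ge0.
  - exact: gts_meas.
  - by apply: ind_meas; exact: measurable_itv.
  move=> x _; rewrite lee_fin indicE; case: (leP x s) => xs.
    by rewrite mem_set ?gts_le1 // in_itv /= xs.
  have -> : gts t s x = 0 by apply: gts_eq0 => //; exact: ltW.
  by rewrite ler0n.
rewrite (integral_indic _ (measurable_itv _) (measurable_itv _)).
apply: le_measure; rewrite ?inE; [apply: measurableI|idtac|apply: subIsetl]; exact: measurable_itv.
Qed.

Lemma B2 (mu : {measure set R -> \bar R}) F c d t s :
  corresponding_measure F c d mu -> {in `[c, d] &, {homo F : u v / u <= v}} ->
  c <= t -> t < s -> s <= d -> (mu `]-oo, t]%classic <= (F s - F c)%:E)%E.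
Proof.
case=> nul Hc Fh ct ts sd.
have cd : c <= d by apply: (le_trans ct); apply: ltW; apply: lt_le_trans ts sd.
set s1 := (t + s) / 2; set h := (s - t) / 2.
have ts1 : t < s1 by rewrite /s1; lra.
have hp : 0 < h by rewrite /h; lra.
have [I RS intI] := Hc (gts t s1) (continuous_subspaceT (@gts_cont R t s1)).
have I1 : I <= F s - F c.
  apply/ler_addgt0Pr => e ep.
  have [n [x [x0 xn Hx Hs]]] := RS_approx cd RS ep hp.
  have := sum_upper Fh x0 xn Hx (@gts_ge0 _ t s1) (@gts_le1 _ t s1)
    (fun u => gts_eq0 ts1) (le_lt_trans ct ts1) (_ : s1 + h <= s) sd hp.
  move: Hs; set S := \sum_(i < n) _ => Hs Sl.
  have : I - S < e by rewrite -opprB normrN in Hs; apply: le_lt_trans (ler_norm _) Hs.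
  have : S <= F s - F c by apply: Sl; rewrite /s1 /h; lra.
  lra.
apply: (@le_trans _ _ I%:E); last by rewrite lee_fin.
rewrite -intI (null_restr nul); last exact: measurable_itv.
rewrite -(integral_indic _ (measurable_itv `[c, d]) (measurable_itv `]-oo, t])).
apply: ge0_le_integral => //.
- by apply: ind_meas; exact: measurable_itv.
- exact: gts_meas.
move=> x _; rewrite lee_fin indicE; case: (leP x t) => xt.
  by rewrite mem_set ?gts_eq1 // in_itv /= xt.
by rewrite memNset ?gts_ge0 // /=; rewrite in_itv /= leNgt xt.
Qed.
End E.
Section Fs.
Variable R : realType.
Implicit Types (c d t s h v : R) (F : R -> R).

Lemma Cp (mu : {measure set R -> \bar R}) F c d t v :
  corresponding_measure F c d mu -> {in `[c, d] &, {homo F : u w / u <= w}} ->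
  c <= t -> t < d ->
  (forall s, t < s -> s <= d -> v <= F s) ->
  (forall e, 0 < e -> exists s, [/\ t < s, s <= d & F s < v + e]) ->
  mu `]-oo, t]%classic = (v - F c)%:E.
Proof.
move=> H Fh ct td vlb vinf.
have cd : c <= d by apply: (le_trans ct); exact: ltW.
apply/eqP; rewrite eq_le; apply/andP; split.
  apply/lee_addgt0Pr => e ep; have [s [ts sd Fs]] := vinf e ep.
  apply: (le_trans (B2 H Fh ct ts sd)).
  rewrite -EFinD lee_fin; lra.
pose S k := `]-oo, t + (d - t) / k.+1%:R]%classic.
have dt : 0 < d - t by rewrite subr_gt0.
have Sd k : 0 < (d - t) / k.+1%:R by rewrite divr_gt0 // ltr0n.
have Sd' k : (d - t) / k.+1%:R <= d - t.
  by rewrite ler_pdivrMr ?ltr0n //; apply: ler_peMr; [exact: ltW | rewrite ler1n].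
have capE : \bigcap_k S k = `]-oo, t]%classic.
  rewrite eqEsubset; split => x /=.
    move=> Hx; rewrite in_itv /= leNgt; apply/negP => tx.
    pose k := Num.truncn ((d - t) / (x - t)).
    have := Hx k I; rewrite /S /= in_itv /=.
    have xt : 0 < x - t by rewrite subr_gt0.
    have : (d - t) / (x - t) < k.+1%:R by exact: truncnS_gt.
    rewrite ltr_pdivrMr // mulrC -ltr_pdivrMr ?ltr0n // => h1 h2.
    by move: h1; rewrite ltNge lerBlDl h2.
  rewrite in_itv /= => xt k _; rewrite /S /= in_itv /=.
  by apply: (le_trans xt); rewrite lerDl ltW.
have fin : (mu (S 0%N) < +oo)%E.
  apply: (le_lt_trans (le_measure _ _ _ _)); rewrite ?inE.
  - exact: measurable_itv.
  - exact: measurableT.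
  - exact: subsetT.
  have mT := massT H cd.
  by rewrite [X in (X < _)%E](_ : _ = (F d - F c)%:E) // ltry.
have noninc : nonincreasing_seq S.
  move=> n m nm; apply/subsetPset => x; rewrite /S /= !in_itv /= => xm; apply: (le_trans xm).
  rewrite lerD2l ler_pM2l // lef_pV2 ?posrE ?ltr0n // ler_nat.
  by [].
have cv := @nonincreasing_cvg_mu _ _ R mu S fin (fun k => measurable_itv _)
  (bigcapT_measurable (fun k => measurable_itv _)) noninc.
rewrite -capE -(cvg_lim _ cv) //.
apply: lime_ge; first by apply/cvg_ex; eexists; exact: cv.
apply: nearW => k /=.
set s := t + (d - t) / k.+1%:R.
have ts : t < s by rewrite /s ltrDl.
have sd : s <= d by rewrite /s; move: (Sd' k); generalize ((d - t) / k.+1%:R) => q; lra.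
have := B1 H Fh (_ : c <= (t + s) / 2) (_ : (t + s) / 2 < s) sd.
move=> /(_ ltac:(lra) ltac:(lra)).
apply: le_trans; rewrite lee_fin lerD2r; apply: vlb; lra.
Qed.
End Fs.
Section push.
Context (R : realType) (nu : {measure set R -> \bar R}) (f : R -> R) (mf : measurable_fun setT f).
Definition rho : {measure set R -> \bar R} :=
  measure_function_pushforward__canonical__measure_function_Measure nu mf.
Lemma rhoE A : rho A = nu (f @^-1` A). Proof. by []. Qed.
End push.

Section Main.
Context (R : realType) (a b : R) (M N : R -> R) (lam nu : {measure set R -> \bar R}).
Hypotheses (ab : a < b) (Mh : {in `[a, b] &, {homo M : x y / x <= y}})
  (Nh : {in `[M a, M b] &, {homo N : x y / x <= y}})
  (Hlam : corresponding_measure (N \o M) a b lam)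
  (Hnu : corresponding_measure N (M a) (M b) nu)
  (Hrc : forall y, multi_level_set M a b y -> y < M b -> N x @[x --> y^'+] --> N y).

Local Notation X := (gen_inverse M a b).

Lemma itvP (x c d : R) : (x \in `[c, d]) = (c <= x <= d).
Proof. by rewrite in_itv. Qed.

Lemma Mle x y : a <= x -> x <= y -> y <= b -> M x <= M y.
Proof. by move=> ax xy yb; apply: Mh => //; rewrite itvP ?ax ?yb ?(le_trans ax xy) ?(le_trans xy yb). Qed.

Lemma Mab : M a <= M b.
Proof. by apply: Mle => //; exact: ltW. Qed.

Lemma MI x : a <= x <= b -> M a <= M x <= M b.
Proof. by case/andP => ax xb; rewrite !Mle. Qed.

Lemma Nle x y : M a <= x -> x <= y -> y <= M b -> N x <= N y.
Proof. by move=> ax xy yb; apply: Nh => //; rewrite itvP ?ax ?yb ?(le_trans ax xy) ?(le_trans xy yb). Qed.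

Lemma Lh : {in `[a, b] &, {homo (N \o M) : u v / u <= v}}.
Proof.
move=> x y xI yI xy /=; move: (xI) (yI); rewrite !itvP => /MI/andP[x1 x2] /MI/andP[y1 y2].
by apply: Nle => //; exact: Mh.
Qed.

Definition Sy y := [set x | a <= x <= b /\ y <= M x].

Lemma Sy_b y : y <= M b -> Sy y b.
Proof. by move=> yb; split => //; rewrite lexx ltW. Qed.

Lemma Sy_lb y : has_lbound (Sy y).
Proof. by exists a => x [/andP[]]. Qed.

Lemma X_in y : y <= M b -> a <= X y <= b.
Proof.
move=> yb; apply/andP; split.
  apply: lb_le_inf; first by exists b; exact: Sy_b.
  by move=> x [/andP[]].
by apply: ge_inf; [exact: Sy_lb | exact: Sy_b].
Qed.

Lemma X_le y t : y <= M b -> a <= t ->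
  (X y <= t <-> forall s, t < s -> s <= b -> y <= M s).
Proof.
move=> yb aT; split.
  move=> Xt s ts sb.
  have [x [/andP[ax xb] yx] xs] : exists2 x, Sy y x & x < s.
    by apply: inf_lt; [exists b; exact: Sy_b | exact: le_lt_trans Xt ts].
  apply: (le_trans yx); apply: Mle => //; exact: ltW.
move=> H; rewrite leNgt; apply/negP => tX.
have /andP[aX Xb] := X_in yb.
set s := (t + X y) / 2.
have ts : t < s by rewrite /s; lra.
have sX : s < X y by rewrite /s; lra.
have : X y <= s.
  apply: ge_inf; first exact: Sy_lb.
  split; last by apply: H => //; lra.
  apply/andP; split; lra.
by rewrite leNgt sX.
Qed.

Lemma X_mono y1 y2 : y1 <= y2 -> y2 <= M b -> X y1 <= X y2.
Proof.
move=> y12 y2b; apply: lb_le_inf; first by exists b; exact: Sy_b.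
move=> x [xI yx]; apply: ge_inf; first exact: Sy_lb.
by split => //; exact: le_trans yx.
Qed.

Definition cl y := Num.max (M a) (Num.min (M b) y).

Lemma cl_in y : M a <= cl y <= M b.
Proof.
rewrite /cl le_max lexx /= ge_max Mab /= ge_min lexx //.
Qed.

Lemma cl_id y : M a <= y <= M b -> cl y = y.
Proof.
case/andP => ay yb; rewrite /cl.
have -> : Num.min (M b) y = y by apply/min_idPr.
by apply/max_idPr.
Qed.

Lemma cl_mono : {homo cl : x y / x <= y}.
Proof. by move=> x y xy; apply: le_max2 => //; exact: le_min2. Qed.

Definition Xc y := X (cl y).

Lemma Xc_mono : {homo Xc : x y / x <= y}.
Proof.
move=> x y xy; apply: X_mono; first exact: cl_mono.
by case/andP: (cl_in y).
Qed.

Lemma mXc : measurable_fun setT Xc.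
Proof. exact: nondecreasing_measurable Xc_mono. Qed.

Definition rh := rho nu mXc.

Let mI : measurable (`[M a, M b]%classic : set R).
Proof. exact: measurable_itv. Qed.

Lemma rhE A : measurable A -> rh A = nu (`[M a, M b] `&` X @^-1` A).
Proof.
move=> mA; rewrite rhoE (null_restr Hnu.1); last first.
  by rewrite -[X in measurable X]setTI; exact: mXc.
rewrite setIC; congr (nu _); apply/seteqP; split => y [yI hy]; split => //.
  by move: hy; rewrite /Xc /= cl_id // -itvP.
by rewrite /Xc /preimage /= cl_id // -itvP.
Qed.

Lemma cdf_mid t : a <= t -> t < b ->
  lam `]-oo, t]%classic = nu (`[M a, M b] `&` X @^-1` `]-oo, t]).
Proof.
move=> aT tb.
set Ms := [set M s | s in `]t, b]%classic].
set m := inf Ms.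
have Msb : Ms (M b) by exists b => //; rewrite /= in_itv /= tb lexx.
have Mslb : has_lbound Ms.
  by exists (M a) => z [s]; rewrite /= in_itv /= => /andP[ts sb] <-; apply: Mle => //; lra.
have mlb s : t < s -> s <= b -> m <= M s.
  by move=> ts sb; apply: ge_inf => //; exists s => //; rewrite /= in_itv /= ts sb.
have minf y : m < y -> exists s, [/\ t < s, s <= b & M s < y].
  move=> my; have [z [s sI <-] Msy] := inf_lt (ex_intro _ _ Msb) my.
  by move: sI; rewrite /= in_itv /= => /andP[ts sb]; exists s.
have mMa : M a <= m.
  apply: lb_le_inf; first by exists (M b).
  by move=> z [s]; rewrite /= in_itv /= => /andP[ts sb] <-; apply: Mle => //; lra.
have mMb : m <= M b by apply: mlb.
have preE : `[M a, M b] `&` X @^-1` `]-oo, t] = `]-oo, m] `&` `[M a, M b] :> set R.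
  apply/seteqP; split => y.
    move=> [yI]; rewrite /preimage /= in_itv /=; move: (yI); rewrite /= in_itv /= => /andP[ay yb].
    move/(X_le yb aT) => H; split => //; rewrite /= in_itv /=.
    rewrite leNgt; apply/negP => my; have [s [ts sb Msy]] := minf _ my.
    have := H s ts sb; lra.
  move=> [ym yI]; split => //; rewrite /preimage /=; move: yI ym; rewrite /= !in_itv /= => /andP[ay yb] ym.
  by apply/(X_le yb aT) => s ts sb; apply: le_trans ym (mlb s ts sb).
rewrite preE -(null_restr Hnu.1); last exact: measurable_itv.
have [mb|mb] := ltP m (M b); last first.
  rewrite (null_restr Hnu.1); last exact: measurable_itv.
  have -> : `]-oo, m] `&` `[M a, M b] = `[M a, M b]%classic :> set R.
    apply/seteqP; split => y; first by case.
    move=> yI; split => //; move: yI; rewrite /= !in_itv /= => /andP[_ yb]; lra.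
  rewrite (mass Hnu Mab).
  apply: (Cp Hlam Lh aT tb) => [s ts sb|e ep].
    apply: Nle; [exact: Mab | exact: le_trans mb (mlb s ts sb) | apply: Mle => //; lra].
  by exists b; split => //=; rewrite ltrDl.
have [[s0 [ts0 s0b Ms0]]|nA] := pselect (exists s0, [/\ t < s0, s0 <= b & M s0 = m]).
  have Hm : multi_level_set M a b m.
    split; first by rewrite mMa mMb.
    exists s0, ((t + s0) / 2); split => //.
    - by apply/andP; split; lra.
    - by apply/andP; split; lra.
    - by rewrite gt_eqF //; lra.
    apply/eqP; rewrite eq_le mlb /=; [|lra|lra].
    by rewrite andbT -Ms0; apply: Mle; lra.
  have Nr := Hrc Hm mb.
  have -> : nu `]-oo, m]%classic = (N m - N (M a))%:E.
    apply: (Cp Hnu Nh mMa mb) => [y my yb|e ep].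
      by apply: Nle => //; exact: ltW.
    move/cvgrPdist_lt: Nr => /(_ e ep) Ne.
    have [y [my yb hy]] : exists y, [/\ m < y, y < M b & `|N m - N y| < e].
      near (m^'+) => y; exists y; split; near: y.
      - exact: nbhs_right_gt.
      - exact: nbhs_right_lt.
      - exact: Ne.
    exists y; split; [lra|lra|].
    by move: hy; rewrite ltr_norml => /andP[h1 h2]; lra.
  apply: (Cp Hlam Lh aT tb) => [s ts sb|e ep].
    apply: Nle => //; first exact: mlb.
    by apply: Mle => //; lra.
  by exists s0; split => //=; rewrite Ms0 ltrDl.
set Ns := [set N y | y in `]m, M b]%classic].
set v := inf Ns.
have Nsne : Ns (N (M b)) by exists (M b) => //; rewrite /= in_itv /= mb lexx.
have Nslb : has_lbound Ns.
  exists (N m) => z [y]; rewrite /= in_itv /= => /andP[my yb] <-.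
  by apply: Nle => //; exact: ltW.
have vlb y : m < y -> y <= M b -> v <= N y.
  by move=> my yb; apply: ge_inf => //; exists y => //; rewrite /= in_itv /= my yb.
have vinf e : 0 < e -> exists y, [/\ m < y, y <= M b & N y < v + e].
  move=> ep; have [z [y yI <-] Ny] := inf_adherent ep (conj (ex_intro _ _ Nsne) Nslb).
  by move: yI; rewrite /= in_itv /= => /andP[my yb]; exists y.
have -> : nu `]-oo, m]%classic = (v - N (M a))%:E.
  by apply: (Cp Hnu Nh mMa mb).
apply: (Cp Hlam Lh aT tb) => [s ts sb|e ep].
  have := mlb s ts sb; rewrite le_eqVlt => /orP[/eqP ms|ms].
    by exfalso; apply: nA; exists s; split.
  by apply: vlb => //; apply: Mle => //; lra.
have [y [my yb Ny]] := vinf e ep.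
have [s [ts sb Msy]] := minf y my.
exists s; split => //=; apply: le_lt_trans Ny; apply: Nle => //; last exact: ltW.
by apply: Mle => //; lra.
Unshelve. all: by end_near.
Qed.

Lemma cdf t : lam `]-oo, t]%classic = rh `]-oo, t]%classic.
Proof.
rewrite rhE; last exact: measurable_itv.
case: (ltP t a) => [ta|aT].
  rewrite (null_restr Hlam.1); last exact: measurable_itv.
  have -> : `]-oo, t] `&` `[a, b] = set0 :> set R.
    apply/seteqP; split => // x [] /=; rewrite !in_itv /= => xt /andP[ax _]; lra.
  have -> : `[M a, M b] `&` X @^-1` `]-oo, t] = set0 :> set R.
    apply/seteqP; split => // y [] /=; rewrite !in_itv /= => /andP[_ yb].
    have /andP[aX _] := X_in yb; lra.
  by rewrite !measure0.
case: (leP b t) => [bt|tb]; last exact: cdf_mid.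
rewrite (null_restr Hlam.1); last exact: measurable_itv.
have -> : `]-oo, t] `&` `[a, b] = `[a, b]%classic :> set R.
  apply/seteqP; split => x; first by case.
  by move=> xI; split => //; move: xI; rewrite /= !in_itv /= => /andP[_ xb]; lra.
have -> : `[M a, M b] `&` X @^-1` `]-oo, t] = `[M a, M b]%classic :> set R.
  apply/seteqP; split => y; first by case.
  move=> yI; split => //; move: yI; rewrite /preimage /= !in_itv /= => /andP[_ yb].
  have /andP[_ Xb] := X_in yb; lra.
by rewrite (mass Hlam (ltW ab)) (mass Hnu Mab).
Qed.

Lemma fin_of (mu : {measure set R -> \bar R}) r : mu setT = r%:E ->
  forall A, measurable A -> mu A \is a fin_num.
Proof.
move=> muT A mA; rewrite ge0_fin_numE ?measure_ge0 //.
apply: (le_lt_trans (le_measure _ _ _ _)); rewrite ?inE.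
- exact: mA.
- exact: measurableT.
- exact: subsetT.
by rewrite [X in (X < _)%E](_ : _ = r%:E) // ltry.
Qed.

Lemma lamT : lam setT = (N (M b) - N (M a))%:E.
Proof. exact: (massT Hlam (ltW ab)). Qed.

Lemma rhT : rh setT = (N (M b) - N (M a))%:E.
Proof. by rewrite rhoE preimage_setT; exact: (massT Hnu Mab). Qed.

Lemma ocE (mu : {measure set R -> \bar R}) x1 x2 : x1 < x2 ->
  mu `]-oo, x1]%classic \is a fin_num ->
  mu `]x1, x2]%classic = (mu `]-oo, x2]%classic - mu `]-oo, x1]%classic)%E.
Proof.
move=> x12 fin.
have -> : `]-oo, x2]%classic = `]-oo, x1] `|` `]x1, x2] :> set R.
  apply/seteqP; split => x /=; rewrite !in_itv /=.
    by move=> xx2; case: (leP x x1) => h; [left|right] => //; rewrite h xx2.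
  by case=> [h|/andP[_ h]] //; lra.
have dis : `]-oo, x1] `&` `]x1, x2] = set0 :> set R.
  by apply/seteqP; split => // x [] /=; rewrite !in_itv /= => h /andP[h1 _]; lra.
rewrite measureU; [|exact: measurable_itv|exact: measurable_itv|exact: dis].
by rewrite [X in (X - _)%E]addrC addeK.
Qed.

Lemma uniq A : measurable A -> lam A = rh A.
Proof.
pose g (k : nat) := `]- k%:R, k%:R]%classic : set R.
apply: (measure_unique (@ocitv R) g) => //. 
- exact: ocitvI.
- by move=> k; exists (- k%:R, k%:R).
- apply/seteqP; split => // x _; exists (Num.truncn `|x|).+1 => //=.
  have := truncnS_gt `|x|; rewrite ltr_norml => /andP[h1 h2].
  by rewrite /g /= in_itv /= h1 ltW.
- move=> B /ocitvP [->|[[x1 x2] /= x12 ->]]; first by rewrite !measure0.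
  have f1 := fin_of lamT (measurable_itv `]-oo, x1]).
  have f2 := fin_of rhT (measurable_itv `]-oo, x1]).
  by rewrite (ocE x12 f1) (ocE x12 f2) !cdf.
- by move=> k; rewrite -ge0_fin_numE ?measure_ge0 //; apply: (fin_of lamT); exact: measurable_itv.
Qed.

Lemma part1 (E : set R) : measurable E -> E `<=` `[a, b] ->
  lam E = nu (`[M a, M b] `&` (X @^-1` E)).
Proof. by move=> mE _; rewrite uniq // rhE. Qed.


Lemma part2 (f : R -> R) : measurable_fun `[a, b] f ->
  (exists k : R, forall x, a <= x <= b -> `|f x| <= k) ->
  (\int[lam]_(x in `[a, b]) (f x)%:E
   = \int[nu]_(y in `[M a, M b]) (f (X y))%:E)%E.
Proof.
move=> mf [k hk].
have mab : measurable (`[a, b]%classic : set R) by exact: measurable_itv.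
pose g := f \_ `[a, b]%classic.
have mg : measurable_fun setT g by apply/(measurable_restrictT f mab).
have gE x : a <= x <= b -> g x = f x.
  by move=> h; rewrite /g patchT // inE /= in_itv /= h.
rewrite (eq_measure_integral rh); last by move=> A mA _; exact: uniq.
transitivity (\int[rh]_(x in `[a, b]) (g x)%:E)%E.
  apply: eq_integral => x; rewrite inE /= in_itv /= => xI.
  by rewrite gE.
have hXc y : a <= Xc y <= b by apply: X_in; case/andP: (cl_in y).
have preT : Xc @^-1` `[a, b] = setT.
  by apply/seteqP; split => // y _; rewrite /preimage /= in_itv /= hXc.
have mEg : measurable_fun setT (EFin \o g) by exact/measurable_EFinP.
have intT : nu.-integrable setT (EFin \o (g \o Xc)).
  apply: measurable_bounded_integrable => //.
  - by rewrite (massT Hnu Mab) ltry.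
  - exact: measurableT_comp mg mXc.
  rewrite /bounded_near; near=> K; move=> y _ /=.
  apply: (@le_trans _ _ k); first by rewrite gE //; apply: hk.
  near: K; apply: nbhs_pinfty_ge; exact: num_real.
have intf : nu.-integrable (Xc @^-1` `[a, b]) ((EFin \o g) \o Xc) by rewrite preT.
apply: (etrans (integral_pushforward mXc mEg intf mab)).
rewrite preT (negligible_integral (measurableC mI) measurableT intT Hnu.1).
rewrite setTD setCK; apply: eq_integral => y; rewrite inE /= in_itv /= => yI.
by rewrite /= /Xc cl_id // gE // X_in //; case/andP: yI.
Unshelve. all: by end_near.
Qed.

End Main.
Unset Implicit Arguments.
Theorem mainTheorem1 (R : realType) (a b : R) (M N : R -> R)
    (lam nu : {measure set R -> \bar R}) :
  a < b ->
  {in `[a, b] &, {homo M : x y / x <= y}} ->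
  {in `[M a, M b] &, {homo N : x y / x <= y}} ->
  corresponding_measure (N \o M) a b lam ->
  corresponding_measure N (M a) (M b) nu ->
  (forall y, multi_level_set M a b y -> y < M b ->
     N x @[x --> y^'+] --> N y) ->
  (forall E : set R, measurable E -> E `<=` `[a, b] ->
     lam E = nu (`[M a, M b] `&` (gen_inverse M a b @^-1` E))) /\
  (forall f : R -> R, measurable_fun `[a, b] f ->
     (exists k : R, forall x, a <= x <= b -> `|f x| <= k) ->
     (\int[lam]_(x in `[a, b]) (f x)%:E
      = \int[nu]_(y in `[M a, M b]) (f (gen_inverse M a b y))%:E)%E).
Proof.
move=> ab Mh Nh Hlam Hnu Hrc; split.
- by move=> E mE sub; exact: (part1 ab Mh Nh Hlam Hnu Hrc mE sub).
- by move=> f mf bd; exact: (part2 ab Mh Nh Hlam Hnu Hrc mf bd).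
Qed.
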